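(* Let $n>1$ be an integer with $F_n=D_n$ such that $n+1$ is prime. Then for every integer $k\ge0$, the integer $m=n(n+1)^k$ satisfies $F_m=D_m$.
   Context: For a composite integer $m$, let $d(m)$ denote the largest divisor of $m$ with $1<d(m)<m$. Define $f$ on integers $m>1$ by $f(m)=m-1$ if $m$ is prime and $f(m)=m-d(m)$ if $m$ is composite. Let $f^{(0)}(m)=m$, $f^{(i)}=f\circ f^{(i-1)}$. Define $F_m=\{m,f(m),f^{(2)}(m),\dots,1\}$, the set of iterates of $f$ from $m$ up to and including the first occurrence of $1$, and let $D_m$ be the set of positive divisors of $m$. *)

(* Defs.v *)
From mathcomp Require Import all_boot.
Set Implicit Arguments. Unset Strict Implicit. Unset Printing Implicit Defensive.

(* largest divisor d of m with 1 < d < m (meaningful for composite m) *)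
Definition dlarge (m : nat) : nat := \max_(2 <= d < m | d %| m) d.

Definition f (m : nat) : nat := if prime m then m.-1 else m - dlarge m.

(* x belongs to F_m: x is an iterate f^(i)(m) with no earlier iterate equal to 1 *)
Definition inF (m x : nat) : Prop :=
  exists i, iter i f m = x /\ forall j, j < i -> iter j f m <> 1.

Definition F_eq_D (m : nat) : Prop :=
  forall x, inF m x <-> (0 < x /\ x %| m).

(* Main.v *)
Require Import Defs.
From mathcomp Require Import all_boot zify.

Lemma dlarge_le x d : 2 <= d < x -> d %| x -> d <= dlarge x.
Proof.
move=> /andP[h1 h2] hd; rewrite /dlarge.
by apply: (leq_bigmax_seq (F:=id)); rewrite // mem_index_iota h1 h2.
Qed.

Lemma f_pdiv x : 1 < x -> f x = x - x %/ pdiv x.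
Proof.
move=> hx; rewrite /f; case: ifP => pr.
  by rewrite pdiv_id // divnn (ltnW hx) subn1.
have pp := pdiv_prime hx; have q2 := prime_gt1 pp.
have qd := pdiv_dvd x.
congr (_ - _); apply/eqP; rewrite eqn_leq; apply/andP; split.
  rewrite /dlarge; apply/bigmax_leqP_seq => d; rewrite mem_index_iota => /andP[d2 dx] dd.
  have [e ex] : exists e, x = d * e by move/dvdnP: dd => [e ->]; exists e; rewrite mulnC.
  have e2 : 1 < e by move: dx d2; rewrite ex; case: e {ex} => [|[|e]]; lia.
  have := pdiv_min_dvd e2 (dvdn_mull d (dvdnn e)); rewrite -ex => qe.
  have -> : d = x %/ e by rewrite ex mulnK; lia.
  by apply: leq_div2l; [exact: pdiv_gt0|].
have x0 : 0 < x by lia.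
have xq : x %/ pdiv x < x by rewrite ltn_Pdiv.
apply: dlarge_le; last exact: dvdn_div.
rewrite xq andbT.
case: (ltnP 1 (x %/ pdiv x)) => // h.
exfalso; move/negbT: pr; apply/negP/negPn.
have : x = pdiv x * (x %/ pdiv x) by rewrite mulnC divnK.
move: h; have : 0 < x %/ pdiv x by rewrite divn_gt0 // pdiv_leq.
case: (x %/ pdiv x) => [|[|]] // _ _; rewrite muln1 => ->; exact: pp.
Qed.

Lemma pdiv_mulp n d j : 0 < n -> prime n.+1 -> d %| n -> 1 < d ->
  pdiv (d * n.+1 ^ j) = pdiv d.
Proof.
move=> n0 pp dn d1.
have dle : d <= n by apply: dvdn_leq.
have p0 : 0 < n.+1 ^ j by rewrite expn_gt0.
have x1 : 1 < d * n.+1 ^ j by have := leq_mul d1 p0; rewrite muln1.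
apply/eqP; rewrite eqn_leq; apply/andP; split.
  apply: pdiv_min_dvd; first exact: prime_gt1 (pdiv_prime d1).
  by apply: dvdn_mulr; exact: pdiv_dvd.
have qp := pdiv_prime x1.
have := pdiv_dvd (d * n.+1 ^ j); rewrite Euclid_dvdM // => /orP[h|h].
  by apply: pdiv_min_dvd => //; exact: prime_gt1.
have := Euclid_dvdX n.+1 j qp; rewrite h => /esym/andP[h2 _].
move: h2; rewrite dvdn_prime2 // => /eqP e.
have := pdiv_min_dvd (prime_gt1 (pdiv_prime d1)) (dvdn_mulr (n.+1^j) (pdiv_dvd d)).
have := pdiv_leq (ltnW d1).
rewrite e; lia.
Qed.

Lemma f_mul n d j : 0 < n -> prime n.+1 -> d %| n -> 1 < d ->
  f (d * n.+1 ^ j) = f d * n.+1 ^ j.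
Proof.
move=> n0 pp dn d1.
have p0 : 0 < n.+1 ^ j by rewrite expn_gt0.
have x1 : 1 < d * n.+1 ^ j by have := leq_mul d1 p0; rewrite muln1.
rewrite !f_pdiv // pdiv_mulp // mulnBl; congr (_ - _).
by rewrite divn_mulAC ?pdiv_dvd.
Qed.

Lemma f_pow n j : prime n.+1 -> f (n.+1 ^ j.+1) = n * n.+1 ^ j.
Proof.
move=> pp.
have x1 : 1 < n.+1 ^ j.+1 by rewrite -[1](exp1n j.+1) ltn_exp2r // prime_gt1.
rewrite f_pdiv // pdiv_pfactor // expnS mulKn // mulSn; lia.
Qed.

Lemma decomp n p k x : prime p -> x %| n * p ^ k ->
  exists a e, [/\ a %| n, e <= k & x = a * p ^ e].
Proof.
move=> pp; elim: k x => [|k IH] x hx.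
  by exists x, 0; rewrite expn0 !muln1 in hx *; split.
case hpx : (p %| x).
  move/dvdnP: hpx => [y ey]; subst x.
  move: hx; rewrite expnS mulnCA mulnC dvdn_pmul2l ?prime_gt0 // => hy.
  have [a [e [h1 h2 h3]]] := IH y hy.
  by exists a, e.+1; split => //; rewrite h3 expnS mulnCA mulnC.
have cx : coprime x (p ^ k.+1).
  by rewrite coprimeXr // coprime_sym prime_coprime // hpx.
by exists x, 0; rewrite muln1; split => //; rewrite -(Gauss_dvdl n cx).
Qed.

Theorem proposition5 (n : nat) :
  1 < n -> F_eq_D n -> prime n.+1 ->
  forall k : nat, F_eq_D (n * n.+1 ^ k).
Proof.
move=> n1 hF pp k.
have n0 : 0 < n by lia.
have p1 := prime_gt1 pp.
have [T [hT hTj]] : inF n 1 by apply/hF; rewrite dvd1n.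
have hdiv : forall i, i <= T -> 0 < iter i f n /\ iter i f n %| n.
  move=> i hi; apply/hF; exists i; split => // j ji; apply: hTj; lia.
have A : forall j i, i <= T -> iter i f (n * n.+1 ^ j) = iter i f n * n.+1 ^ j.
  move=> j; elim=> [|i IH] hi //.
  rewrite !iterS IH ?(ltnW hi) //.
  have [d0 dn] := hdiv i (ltnW hi).
  have d1 : iter i f n <> 1 by apply: hTj.
  rewrite f_mul //; lia.
have B : forall c, c <= k -> iter (c * T.+1) f (n * n.+1 ^ k) = n * n.+1 ^ (k - c).
  elim=> [|c IH] hc; first by rewrite mul0n subn0.
  rewrite mulSn iterD IH; last lia.
  rewrite iterS A // hT mul1n.
  have -> : k - c = (k - c.+1).+1 by lia.
  exact: f_pow.
have C : forall c i, c <= k -> i <= T ->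
    iter (c * T.+1 + i) f (n * n.+1 ^ k) = iter i f n * n.+1 ^ (k - c).
  by move=> c i hc hi; rewrite addnC iterD B // A.
have Cne : forall I, I < k * T.+1 + T -> iter I f (n * n.+1 ^ k) <> 1.
  move=> I hI.
  have hdec := divn_eq I T.+1.
  have hi : I %% T.+1 < T.+1 by rewrite ltn_mod.
  have hc : I %/ T.+1 <= k.
    rewrite -ltnS ltn_divLR // mulSn; lia.
  rewrite hdec C //.
  move/eqP; rewrite muln_eq1 => /andP[/eqP h1 /eqP h2].
  have kc : k - I %/ T.+1 = 0.
    move: h2; case: (k - I %/ T.+1) => // e; rewrite expnS.
    have := expn_gt0 n.+1 e; nia.
  have ck : I %/ T.+1 = k by lia.
  rewrite ck in hdec.
  have ci : I %% T.+1 < T by lia.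
  exact: hTj ci h1.
have C1 : iter (k * T.+1 + T) f (n * n.+1 ^ k) = 1.
  by rewrite C // subnn expn0 muln1.
move=> x; split.
  move=> [I [hx hpre]].
  have hI : I <= k * T.+1 + T.
    rewrite leqNgt; apply/negP => h; exact: hpre _ h C1.
  have hdec := divn_eq I T.+1.
  have hi : I %% T.+1 < T.+1 by rewrite ltn_mod.
  have hc : I %/ T.+1 <= k.
    rewrite -ltnS ltn_divLR // mulSn; lia.
  move: hx; rewrite hdec C //.
  move=> <-; have [d0 dn] := hdiv (I %% T.+1) hi.
  split; first by rewrite muln_gt0 d0 expn_gt0.
  by apply: dvdn_mul => //; rewrite dvdn_exp2l // leq_subr.
move=> [x0 xd].
have [a [e [an ek xe]]] := @decomp n n.+1 k x pp xd. subst x.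
have a0 : 0 < a by move: x0; rewrite muln_gt0 => /andP[].
have [i [hi hpre]] : inF n a by apply/hF.
have iT : i <= T.
  rewrite leqNgt; apply/negP => h; exact: hpre _ h hT.
exists ((k - e) * T.+1 + i); split.
  by rewrite C // ?leq_subr // hi subKn.
move=> j hj; apply: Cne.
have : (k - e) * T.+1 <= k * T.+1 by rewrite leq_mul2r leq_subr orbT.
lia.
Qed.
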